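(* Let $a\in\mathbb{R}$ and $\theta\in(0,\pi)$, with $\theta\neq\cos^{-1}\!\left(-\frac{1}{2\sqrt a}\right)$ whenever $a>1/4$. Let \[ \zeta=\zeta(\theta)=\frac{(2a-1)\cos\theta+\sqrt{(1-4a)\cos^2\theta+a}}{1-4a\cos^2\theta},\qquad z(\theta)=\frac{a\zeta}{(2\cos\theta+\zeta)(1+2\zeta\cos\theta)}. \] Then the zeros in $t$ of $1+t+at^2+z(\theta)t^3$ are \[ t_0=-\frac{e^{2i\theta}+\zeta e^{i\theta}+\zeta e^{3i\theta}}{\zeta e^{3i\theta}},\qquad t_1=t_0e^{2i\theta},\qquad t_2=\zeta e^{i\theta}t_0. \]
   Context: The square root denotes the principal square root (it may be non-real if the radicand is negative); the statement concerns those $\theta$ for which $\zeta(\theta)$ and $z(\theta)$ are defined (nonzero denominators). *)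

(* Defs.v *)
From Stdlib Require Import Reals.
From Coquelicot Require Export Coquelicot.
Export Complex.
Open Scope R_scope.

Definition csqrt_real (r : R) : C :=
  if Rle_dec 0 r then RtoC (sqrt r) else (0, sqrt (- r))%R.

Definition cis (x : R) : C := (cos x, sin x).

Definition zeta (a th : R) : C :=
  ((RtoC ((2 * a - 1) * cos th) + csqrt_real ((1 - 4 * a) * (cos th) ^ 2 + a))
   / RtoC (1 - 4 * a * (cos th) ^ 2))%C.

Definition zfun (a th : R) : C :=
  (RtoC a * zeta a th
   / ((RtoC (2 * cos th) + zeta a th) * (1 + RtoC (2 * cos th) * zeta a th)))%C.

Definition t0 (a th : R) : C :=
  (- ((cis th ^ 2 + zeta a th * cis th + zeta a th * cis th ^ 3)
      / (zeta a th * cis th ^ 3)))%C.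
Definition t1 (a th : R) : C := (t0 a th * cis th ^ 2)%C.
Definition t2 (a th : R) : C := (zeta a th * cis th * t0 a th)%C.

(* Main.v *)
Require Import Defs.
From Stdlib Require Import Reals Lra.
From Coquelicot Require Import Coquelicot.

Lemma key (w ze t : C) :
  w <> 0%C -> ze <> 0%C -> (1 + (w + /w) * ze)%C <> 0%C -> ((w + / w) + ze)%C <> 0%C ->
  let a := (ze * ((w + /w) + ze) / (1 + (w + /w)*ze)^2)%C in
  let z := (a * ze / (((w + /w) + ze) * (1 + (w + /w)*ze)))%C in
  let t0 := (- ((w ^ 2 + ze * w + ze * w ^ 3) / (ze * w ^ 3)))%C in
  (1 + t + a * t ^ 2 + z * t ^ 3)%C
    = (z * (t - t0) * (t - t0 * w^2) * (t - ze * w * t0))%C.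
Proof.
intros Hw Hz Hu Hv a z t0. subst a z t0.
assert (M : forall x y : C, x <> 0%C -> y <> 0%C -> (x * y)%C <> 0%C).
{ intros x y Hx Hy H. apply Hy. replace y with (/x * (x*y))%C by (field; auto).
  rewrite H. ring. }
field. repeat split; auto.
- intro H. apply (M w (1 + (w + /w) * ze)%C Hw Hu). rewrite <- H. field. auto.
- intro H. apply (M w (w + /w + ze)%C Hw Hv). rewrite <- H. field. auto.
Qed.

Lemma csq (r : R) : (csqrt_real r * csqrt_real r)%C = RtoC r.
Proof.
unfold csqrt_real. destruct (Rle_dec 0 r) as [h|h].
- rewrite <- RtoC_mult. rewrite sqrt_sqrt; auto.
- unfold Cmult, RtoC; simpl. assert (h' : 0 <= - r) by lra.
  f_equal; [| ring]. replace (0 * 0 - sqrt (- r) * sqrt (- r)) with (- (sqrt (-r) * sqrt (-r))) by ring.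
  rewrite sqrt_sqrt; auto; ring.
Qed.

Lemma prod_nz (x y : C) : (x * y)%C <> 0%C -> x <> 0%C /\ y <> 0%C.
Proof. intros H; split; intro E; apply H; rewrite E; ring. Qed.

Theorem lemma2p7 (a th : R) :
  0 < th < PI ->
  (1 / 4 < a -> th <> acos (- (1 / (2 * sqrt a)))) ->
  (* zeta(theta) is defined *)
  1 - 4 * a * (cos th) ^ 2 <> 0 ->
  (* z(theta) is defined *)
  ((RtoC (2 * cos th) + zeta a th) * (1 + RtoC (2 * cos th) * zeta a th))%C <> 0%C ->
  (* t0 is defined *)
  zeta a th <> 0%C ->
  forall t : C,
    (1 + t + RtoC a * t ^ 2 + zfun a th * t ^ 3)%C
    = (zfun a th * (t - t0 a th) * (t - t1 a th) * (t - t2 a th))%C.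
Proof.
intros _ _ HD Hzz Hz t.
destruct (prod_nz _ _ Hzz) as [Hv Hu].
set (w := cis th).
assert (Hw1 : (w * (RtoC (2 * cos th) - w))%C = 1%C).
{ unfold w, cis, Cmult, Cminus, Cplus, Copp, RtoC; simpl.
  pose proof (sin2_cos2 th). unfold Rsqr in H. f_equal; lra. }
assert (Hw : w <> 0%C).
{ intro E. rewrite E in Hw1. rewrite Cmult_0_l in Hw1.
  apply (f_equal fst) in Hw1. simpl in Hw1. lra. }
assert (Hc : RtoC (2 * cos th) = (w + / w)%C).
{ replace (/ w)%C with (/w * (w * (RtoC (2 * cos th) - w)))%C by (rewrite Hw1; ring).
  field. auto. }
set (ze := zeta a th) in *.
assert (Ha : RtoC a = (ze * ((w + /w) + ze) / (1 + (w + /w)*ze)^2)%C).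
{ assert (K : (RtoC a * (1 + RtoC(2*cos th)*ze)^2 = ze * (RtoC(2*cos th) + ze))%C).
  { set (r := (1 - 4 * a) * cos th ^ 2 + a).
    set (s := csqrt_real r).
    assert (hs := csq r). fold s in hs.
    set (D := RtoC (1 - 4 * a * cos th ^ 2)).
    set (B := RtoC ((2 * a - 1) * cos th)).
    assert (HD' : D <> 0%C).
    { intro E. apply HD. apply (f_equal fst) in E. simpl in E. exact E. }
    assert (hz : (ze * D - B)%C = s).
    { unfold ze, zeta. fold r s D B. field. auto. }
    assert (eD : D = (1 - 4 * RtoC a * RtoC (cos th) ^ 2)%C).
    { unfold D, RtoC, Cmult, Cminus, Cplus, Copp; simpl. f_equal; ring. }
    assert (eB : B = ((2 * RtoC a - 1) * RtoC (cos th))%C).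
    { unfold B, RtoC, Cmult, Cminus, Cplus, Copp; simpl. f_equal; ring. }
    assert (er : RtoC r = ((1 - 4 * RtoC a) * RtoC (cos th) ^ 2 + RtoC a)%C).
    { unfold r, RtoC, Cmult, Cminus, Cplus, Copp; simpl. f_equal; ring. }
    assert (e2 : RtoC (2 * cos th) = (2 * RtoC (cos th))%C).
    { unfold RtoC, Cmult, Cminus, Cplus, Copp; simpl. f_equal; ring. }
    rewrite e2.
    assert (E : (D * (RtoC a * (1 + 2 * RtoC (cos th) * ze) ^ 2 - ze * (2 * RtoC (cos th) + ze))
       = (RtoC r - s*s) - ((ze * D - B)^2 - s^2))%C).
    { rewrite er, eD, eB. ring. }
    rewrite hz, <- hs in E.
    assert (E0 : (D * (RtoC a * (1 + 2 * RtoC (cos th) * ze) ^ 2 - ze * (2 * RtoC (cos th) + ze)))%C = 0%C)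
      by (rewrite E; ring).
    set (L := (RtoC a * (1 + 2 * RtoC (cos th) * ze) ^ 2)%C) in *.
    set (R0 := (ze * (2 * RtoC (cos th) + ze))%C) in *.
    transitivity ((L - R0) + R0)%C; [ring|].
    replace (L - R0)%C with (/D * (D * (L - R0)))%C
      by (field; auto).
    rewrite E0. ring. }
  rewrite <- Hc. rewrite <- K. field. auto. }
unfold t1, t2, t0, zfun. fold ze. fold w. rewrite Ha, Hc.
rewrite Hc in Hu, Hv.
apply key; auto.
Qed.
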